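(* Let $N\in\mathbb{N}$, $N\geqslant2$, and let $f:[0,1]\times\mathbb{R}\to\mathbb{R}$ be continuous with continuous partial derivative $f_x$ with respect to the second variable, satisfying $\inf_{[0,1]\times\mathbb{R}}f_x>-1$. Then for every $x\in\mathbb{E}_N$ the linear operator $D_N'(x):\mathbb{E}_N\to\mathbb{E}_N$ is invertible.
   Context: $\mathbb{E}_N$ is the space of $x:\{0,\dots,N\}\to\mathbb{R}$ with $x(0)=x(N)=0$. $\Delta x(k-1)=x(k)-x(k-1)$, $\Delta^2x(k-1)=x(k+1)-2x(k)+x(k-1)$. $D_N:\mathbb{E}_N\to\mathbb{E}_N$ is $(D_Nx)(k)=\Delta^2x(k-1)-\frac{1}{N^2}f(\frac kN,x(k))$ for $k=1,\dots,N-1$, $(D_Nx)(0)=(D_Nx)(N)=0$; its derivative at $x$ is $D_N'(x)h(k)=\Delta^2h(k-1)-\frac{1}{N^2}f_x(\frac kN,x(k))h(k)$ for $k=1,\dots,N-1$ and $0$ at $k=0,N$. *)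

(* Defs.v *)
From HB Require Import structures.
From mathcomp Require Import all_boot all_order all_algebra.
From mathcomp Require Import all_classical all_reals all_analysis.
Set Implicit Arguments. Unset Strict Implicit. Unset Printing Implicit Defensive.
Import Order.TTheory GRing.Theory Num.Theory.
Import numFieldNormedType.Exports.
Local Open Scope classical_set_scope.
Local Open Scope ring_scope.

(* Elements of E_N are represented by functions nat -> R; only the values on
   {0,...,N} matter. *)
Definition EN {R : realType} (N : nat) (x : nat -> R) : Prop :=
  x 0%N = 0 /\ x N = 0.

Definition fx {R : realType} (f : R -> R -> R) (t s : R) : R :=
  derive1 (f t) s.

Definition DNp {R : realType} (f : R -> R -> R) (N : nat) (x h : nat -> R)
  : nat -> R :=
  fun k => if (0 < k < N)%N then
             (h k.+1 - 2 * h k + h k.-1)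
             - (N%:R ^+ 2)^-1 * fx f (k%:R / N%:R) (x k) * h k
           else 0.

(* Invertibility of a map L : E_N -> E_N (elements identified when they
   agree on {0..N}): L maps E_N into E_N and is a bijection of E_N. *)
Definition invertible_on_EN {R : realType} (N : nat)
  (L : (nat -> R) -> (nat -> R)) : Prop :=
  (forall h, EN N h -> EN N (L h)) /\
  (forall y, EN N y -> exists h, EN N h /\ forall k, (k <= N)%N -> L h k = y k) /\
  (forall h1 h2, EN N h1 -> EN N h2 ->
     (forall k, (k <= N)%N -> L h1 k = L h2 k) ->
     forall k, (k <= N)%N -> h1 k = h2 k).

(* Main.v *)
Require Import Defs.
From HB Require Import structures.
From mathcomp Require Import all_boot all_order all_algebra.
From mathcomp Require Import all_classical all_reals all_analysis.
From mathcomp Require Import ring lra zify.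
Import Order.TTheory GRing.Theory Num.Theory.
Import numFieldNormedType.Exports.
Local Open Scope classical_set_scope.
Local Open Scope ring_scope.

Section Aux.
Variable R : realType.
Variables (c g : nat -> R) (a b : R).

Fixpoint solp (n : nat) : R * R :=
  match n with
  | 0%N => (a, b)
  | n'.+1 => let pq := solp n' in (pq.2, (2 + c n) * pq.2 - pq.1 + g n)
  end.

Definition sol n := (solp n).1.

Lemma sol0 : sol 0 = a. Proof. by []. Qed.
Lemma sol1 : sol 1 = b. Proof. by []. Qed.
Lemma solS n : sol n.+2 = (2 + c n.+1) * sol n.+1 - sol n + g n.+1.
Proof. by rewrite /sol /=. Qed.
End Aux.
Arguments sol {R}.
Arguments solS {R}.

Definition vv {R : realType} (N k : nat) : R := k%:R * (2 * N%:R - k%:R).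

Lemma pos_u (R : realType) (N : nat) (c : nat -> R) :
  (forall k, (0 < k < N)%N -> 0 <= vv N k * c k + 2) ->
  forall k, (k < N)%N ->
    0 < sol c (fun _ => 0) 0 1 k.+1 /\
    vv N k.+1 * sol c (fun _ => 0) 0 1 k <= vv N k * sol c (fun _ => 0) 0 1 k.+1.
Proof.
move=> Hc; elim=> [|k IH] HkN.
  by rewrite sol1 sol0 /vv !mulr0 mul0r; split=> //; lra.
have [IH1 IH2] := IH (ltnW HkN).
set u := sol c (fun _ => 0) 0 1.
have Hrec : u k.+2 = (2 + c k.+1) * u k.+1 - u k by rewrite /u solS addr0.
have Hck := Hc k.+1 (andb_true_intro (conj (ltn0Sn k) HkN)).
have Hv : vv N k.+1 * 2 - vv N k.+2 - vv N k = 2 :> R.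
  rewrite /vv -!natr1; ring.
have vpos1 : 0 < vv N k.+1 :> R.
  rewrite /vv mulr_gt0 // ?ltr0n // subr_gt0.
  have : (k.+1 < 2 * N)%N by lia.
  by rewrite -(ltr_nat R) natrM.
have vpos2 : 0 < vv N k.+2 :> R.
  rewrite /vv mulr_gt0 // ?ltr0n // subr_gt0.
  have : (k.+2 < 2 * N)%N by lia.
  by rewrite -(ltr_nat R) natrM.
have key : vv N k.+2 * u k.+1 <= vv N k.+1 * u k.+2.
  rewrite Hrec.
  have e : vv N k.+1 * ((2 + c k.+1) * u k.+1 - u k) - vv N k.+2 * u k.+1
     = u k.+1 * (vv N k.+1 * c k.+1 + 2) + (vv N k * u k.+1 - vv N k.+1 * u k).
    have -> : vv N k.+2 = vv N k.+1 * 2 - vv N k - 2 :> R by lra.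
    ring.
  rewrite -subr_ge0 e; apply: addr_ge0; first by apply: mulr_ge0 => //; lra.
  by rewrite subr_ge0.
split=> //.
have : 0 < vv N k.+1 * u k.+2 by apply: lt_le_trans key; apply: mulr_gt0.
by rewrite pmulr_rgt0.
Qed.

Lemma uniq_u (R : realType) (N : nat) (c : nat -> R) (h : nat -> R) :
  (1 <= N)%N -> h 0%N = 0 ->
  (forall j, (j.+2 <= N)%N -> h j.+2 = (2 + c j.+1) * h j.+1 - h j) ->
  forall k, (k <= N)%N -> h k = h 1%N * sol c (fun _ => 0) 0 1 k.
Proof.
move=> HN h0 Hh.
suff H : forall k, (k.+1 <= N)%N ->
  h k = h 1%N * sol c (fun _ => 0) 0 1 k /\ h k.+1 = h 1%N * sol c (fun _ => 0) 0 1 k.+1.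
  case=> [|k] Hk; first by rewrite h0 sol0 mulr0.
  by case: (H k Hk).
elim=> [|k IH] Hk; first by rewrite h0 sol0 sol1 mulr0 mulr1.
have [I1 I2] := IH (ltnW Hk); split=> //.
by rewrite Hh // solS I1 I2; ring.
Qed.

Theorem lemma10 (R : realType) (N : nat) (f : R -> R -> R) :
  (2 <= N)%N ->
  {within [set p : R * R | 0 <= p.1 <= 1], continuous (fun p : R * R => f p.1 p.2)} ->
  (forall t s : R, 0 <= t <= 1 -> derivable (f t) s 1) ->
  {within [set p : R * R | 0 <= p.1 <= 1], continuous (fun p : R * R => fx f p.1 p.2)} ->
  (exists m : R, -1 < m /\ forall t s : R, 0 <= t <= 1 -> m <= fx f t s) ->
  forall x : nat -> R, EN N x -> invertible_on_EN N (DNp f N x).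
Proof.
move=> HN _ _ _ [m [Hm Hfx]] x _.
set c : nat -> R := fun k => (N%:R ^+ 2)^-1 * fx f (k%:R / N%:R) (x k).
have DE h k : DNp f N x h k = if (0 < k < N)%N then
    (h k.+1 - 2 * h k + h k.-1) - c k * h k else 0 by [].
have Nr : 0 < N%:R :> R by rewrite ltr0n; lia.
have Hc : forall k, (0 < k < N)%N -> 0 <= vv N k * c k + 2.
  move=> k /andP [k0 kN].
  have Ht : 0 <= (k%:R / N%:R : R) <= 1.
    apply/andP; split; first by apply: divr_ge0.
    by rewrite ler_pdivrMr // mul1r ler_nat ltnW.
  have Hf := Hfx _ (x k) Ht.
  set F := fx f _ _ in Hf.
  have -> : vv N k * c k = (vv N k / N%:R ^+ 2) * F by rewrite /c; rewrite mulrA.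
  have t0 : 0 <= vv N k / N%:R ^+ 2 :> R.
    apply: divr_ge0; last by rewrite exprn_ge0 // ltW.
    rewrite /vv mulr_ge0 // subr_ge0.
    have : (k <= 2 * N)%N by lia.
    by rewrite -(ler_nat R) natrM.
  have t1 : vv N k / N%:R ^+ 2 <= 1 :> R.
    rewrite ler_pdivrMr ?exprn_gt0 // mul1r /vv.
    have : (k%:R <= N%:R :> R) by rewrite ler_nat ltnW.
    move=> kk; nra.
  nra.
have HP := @pos_u R N c Hc.
set u := sol c (fun _ => 0) 0 1 in HP.
have uN : 0 < u N.
  have HN1 : (N.-1 < N)%N by lia.
  have [H1 _] := HP _ HN1.
  by have <- : (N.-1).+1 = N by lia.
split.
  by move=> h _; rewrite /EN !DE /= ltnn andbF.
split.
  move=> y [y0 yN].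
  set s := sol c y 0 0.
  set al := - s N / u N.
  exists (fun k => s k + al * u k); split.
    split; first by rewrite /s /u !sol0 mulr0 addr0.
    by rewrite /al mulfVK ?gt_eqF // subrr.
  move=> k kN; rewrite DE.
  case: ifP => [/andP [k0 kN']|Hk].
    case: k k0 kN kN' => [//|j] _ _ _ /=.
    rewrite /s /u !solS; ring.
  case: k kN Hk => [|k] kN Hk; first by rewrite y0.
  have -> : k.+1 = N by apply/eqP; rewrite eqn_leq kN /=; move: Hk; lia.
  by rewrite yN.
move=> h1 h2 [h10 h1N] [h20 h2N] Heq.
set h := fun k => h1 k - h2 k.
have Hh : forall k, (k <= N)%N -> h k = h 1%N * u k.
  apply: (@uniq_u R N c h); first lia.
    by rewrite /h h10 h20 subrr.
  move=> j Hj; have := Heq j.+1 (ltnW Hj).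
  rewrite !DE.
  have -> : (0 < j.+1 < N)%N by lia.
  move=> /= E; rewrite /h; lra.
have h1z : h 1%N = 0.
  have := Hh N (leqnn N); rewrite /h h1N h2N subrr => /esym /eqP.
  by rewrite mulf_eq0 (gt_eqF uN) orbF => /eqP.
move=> k kN; apply/eqP; rewrite -subr_eq0; apply/eqP.
by have := Hh k kN; rewrite h1z mul0r.
Qed.
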